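(* Let $\ell\ge1$, $2n=\ell(\ell+1)$, and fix integers $k\ge1$ and $N\ge1$ independent of $\ell$, with $2k\le\ell+1$. Let $Y^{(1)},\dots,Y^{(N)}$ be independent, each uniformly random among all ordered partitions of $[2n]$ into $\ell+1$ subsets of size $\ell$. Then the probability $P_N$ that some $S\in\mathcal S_{2k}$ is generated by none of $Y^{(1)},\dots,Y^{(N)}$ satisfies $P_N\le\binom{2n}{2k}P(S)^N$ and $P_N=\mathcal O(\ell^{4k-N})$ as $\ell\to\infty$; in particular $P_N\to0$ whenever $N>4k$.
   Context: $\mathcal S_{2k}=\{S\subseteq[2n]:|S|=2k\}$. A set $S$ is generated from a partition $Y=(Y_1,\dots,Y_{\ell+1})$ if no two elements of $S$ lie in the same $Y_i$. $P(S)=1-\ell^{2k}\binom{\ell+1}{2k}\binom{2n}{2k}^{-1}$ is the probability that a fixed $S$ is not generated by one uniformly random partition. *)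

(* Defs.v *)
From mathcomp Require Import all_boot all_order all_algebra.
Set Implicit Arguments. Unset Strict Implicit. Unset Printing Implicit Defensive.
Import Order.TTheory GRing.Theory Num.Theory.

Notation ground l := 'I_(l * l.+1).

(* An ordered partition Y = (Y_1,...,Y_{l+1}) of [2n] is encoded by the map
   f assigning to each element the index of its block: Y_i = f^-1(i).
   It is admissible iff every block has size l. *)
Definition part_ok (l : nat) (f : {ffun ground l -> 'I_l.+1}) : bool :=
  [forall i : 'I_l.+1, #|[set x | f x == i]| == l].

Definition generated (l : nat) (S : {set ground l})
  (f : {ffun ground l -> 'I_l.+1}) : bool :=
  [forall x in S, forall y in S, (f x == f y) ==> (x == y)].

(* Sample space: N-tuples of admissible ordered partitions (uniform measure
   on this set = N independent uniform partitions). *)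
Definition Omega (l N : nat) : {set {ffun 'I_N -> {ffun ground l -> 'I_l.+1}}} :=
  [set Y : {ffun 'I_N -> {ffun ground l -> 'I_l.+1}} | [forall j, part_ok (Y j)]].

Definition bad_event (l k N : nat) : {set {ffun 'I_N -> {ffun ground l -> 'I_l.+1}}} :=
  [set Y : {ffun 'I_N -> {ffun ground l -> 'I_l.+1}} in Omega l N | [exists S : {set ground l},
        (#|S| == 2 * k) && [forall j, ~~ generated S (Y j)]]].

Definition P_N (l k N : nat) : rat :=
  (#|bad_event l k N|%:R / #|Omega l N|%:R)%R.

Definition PS (l k : nat) : rat :=
  (1 - (l ^ (2 * k) * 'C(l.+1, 2 * k))%:R / ('C(l * l.+1, 2 * k))%:R)%R.

(* Main.v *)
Require Import Defs.
From mathcomp Require Import all_boot all_order all_algebra all_fingroup.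
From mathcomp Require Import zify ring lra.
Import Order.TTheory GRing.Theory Num.Theory.

Lemma card_sumb {T : finType} (A : {pred T}) : #|A| = \sum_i (i \in A : nat).
Proof. by rewrite -sum1_card big_mkcond; apply: eq_bigr => i _; case: (i \in A). Qed.

Section Comb.
Variable l : nat.
Local Notation T := (ground l).
Local Notation fT := {ffun T -> 'I_l.+1}.

Lemma genP (S : {set T}) (f : fT) : reflect {in S &, injective f} (Defs.generated S f).
Proof.
apply: (iffP forall_inP) => [H x y xS yS fxy | H x xS].
  by have /forall_inP/(_ y yS)/implyP/(_ (introT eqP fxy))/eqP := H x xS.
by apply/forall_inP => y yS; apply/implyP => /eqP /H; move=> /(_ xS yS) ->.
Qed.

Definition G (S : {set T}) := #|[set f : fT | part_ok f && Defs.generated S f]|.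

Lemma G_perm (s : {perm T}) S : G S = G (s @: S).
Proof.
rewrite /G.
pose psi (f : fT) : fT := [ffun x => f (s x)].
have psi_inj : injective psi.
  move=> f g /ffunP E; apply/ffunP => y.
  by have := E ((s^-1)%g y); rewrite !ffunE permKV.
have okE f : part_ok (psi f) = part_ok f.
  have E i : #|[set x | psi f x == i]| = #|[set x | f x == i]|.
    have -> : [set x | psi f x == i] = s @^-1: [set x | f x == i].
      by apply/setP => x; rewrite !inE ffunE.
    by rewrite card_preimset //; apply: perm_inj.
  by apply/forallP/forallP => H i; move: (H i); rewrite E.
have genE f : Defs.generated S (psi f) = Defs.generated (s @: S) f.
  apply/genP/genP => H.
    move=> _ _ /imsetP[x xS ->] /imsetP[y yS ->] E.
    by congr (s _); apply: H => //; rewrite !ffunE.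
  move=> x y xS yS; rewrite !ffunE => E; apply: perm_inj; apply: H; [exact: (imset_f s xS) | exact: (imset_f s yS) | exact: E].
have -> : [set f : fT | part_ok f && Defs.generated S f] =
          psi @: [set f : fT | part_ok f && Defs.generated (s @: S) f].
  apply/setP => g; rewrite inE; apply/idP/imsetP.
    move=> /andP[okg gg]; exists [ffun y => g ((s^-1)%g y)].
      rewrite inE -okE -genE.
      have -> : psi [ffun y => g ((s^-1)%g y)] = g.
        by apply/ffunP => x; rewrite !ffunE permK.
      by rewrite okg gg.
    by apply/ffunP => x; rewrite !ffunE permK.
  by move=> [f]; rewrite inE => /andP[okf gf] ->; rewrite okE genE okf gf.
by rewrite card_imset.
Qed.

Lemma G_const n : forall S S' : {set T}, #|S :\: S'| = n -> #|S| = #|S'| -> G S = G S'.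
Proof.
elim: n => [|n IH] S S' hn hc.
  have /eqP -> : S == S'.
    by rewrite eqEcard -setD_eq0 -cards_eq0 hn hc leqnn.
  by [].
have : (0 < #|S :\: S'|)%N by rewrite hn.
rewrite card_gt0 => /set0Pn[x xD].
have hc2 : #|S' :\: S| = n.+1.
  have h1 := cardsID S' S. have h2 := cardsID S S'.
  rewrite setIC in h2. lia.
have : (0 < #|S' :\: S|)%N by rewrite hc2.
rewrite card_gt0 => /set0Pn[y yD].
move: xD yD; rewrite !inE => /andP[xS' xS] /andP[yS yS'].
pose t := tperm x y.
have memt z : (z \in t @: S) = (t z \in S).
  by rewrite /t -{1}(tpermV x y) im_permV inE.
rewrite (G_perm t); apply: IH.
  have -> : t @: S :\: S' = (S :\: S') :\ x.
    apply/setP => z; rewrite !inE memt /t.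
    case: tpermP => [-> | -> | zx zy].
    - by rewrite eqxx (negbTE yS) !andbF.
    - by rewrite yS' /= ?andbF.
    - by move/eqP: zx => /negbTE ->.
  have := cardsD1 x (S :\: S'); rewrite !inE xS xS' hn /=; lia.
by rewrite card_imset //; apply: perm_inj.
Qed.
End Comb.


Section PerF.
Variables (l m : nat).
Local Notation T := (ground l).
Local Notation fT := {ffun T -> 'I_l.+1}.
Variable f : fT.
Hypothesis fok : part_ok f.

Definition phi (S : {set T}) : {ffun 'I_l.+1 -> option T} :=
  [ffun i => [pick x in S | f x == i]].
Definition Fi (i : 'I_l.+1) : {set option T} := [set Some x | x in [set x | f x == i]].

Lemma card_Fi i : #|Fi i| = l.
Proof.
rewrite card_imset; last by move=> a b [].
by move/forallP: fok => /(_ i)/eqP.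
Qed.

Lemma card_pf (B : {set 'I_l.+1}) : #|pfamily None B Fi| = l ^ #|B|.
Proof.
rewrite card_pfamily foldrE big_map big_enum /=.
rewrite (eq_bigr (fun _ => l)) ?prod_nat_const // => i _; exact: card_Fi.
Qed.

Lemma pf_surj (B : {set 'I_l.+1}) g : #|B| = m -> g \in pfamily None B Fi ->
  g \in phi @: [set S : {set T} | (#|S| == m) && Defs.generated S f].
Proof.
move=> hB /pfamilyP [/supportP hsupp hfam].
pose S := [set x | g (f x) == Some x].
have gS i x : g i = Some x -> f x = i.
  move=> gi; case: (boolP (i \in B)) => iB.
    by move: (hfam i iB); rewrite gi => /imsetP[y]; rewrite inE => /eqP <- [->].
  by move: (hsupp i iB); rewrite gi.
apply/imsetP; exists S.
  rewrite inE; apply/andP; split.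
    have injS : {in S &, injective f}.
      move=> x y; rewrite !inE => /eqP gx /eqP gy fxy.
      by move: gx; rewrite fxy gy => -[].
    suff fSB : f @: S = B by rewrite -(card_in_imset injS) fSB hB.
    apply/setP => i; apply/imsetP/idP.
      move=> [x]; rewrite inE => /eqP gx ->; apply: contraT => iB.
      by move: (hsupp _ iB); rewrite gx.
    move=> iB; move: (hfam i iB) => /imsetP[x]; rewrite inE => /eqP fx gi.
    by exists x => //; rewrite inE fx gi.
  apply/genP => x y; rewrite !inE => /eqP gx /eqP gy fxy.
  by move: gx; rewrite fxy gy => -[].
apply/ffunP => i; rewrite ffunE.
case: pickP => [x /andP[]| none].
  by rewrite inE => /eqP gx /eqP <-.
case gi: (g i) => [x|] //.
have fx := gS _ _ gi.
by move: (none x); rewrite inE fx gi !eqxx.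
Qed.

Lemma pf_supp (B : {set 'I_l.+1}) g : g \in pfamily None B Fi ->
  B = [set i | g i != None].
Proof.
move=> /pfamilyP [/supportP hsupp hfam]; apply/setP => i; rewrite inE.
case: (boolP (i \in B)) => iB.
  by move: (hfam i iB); case: (g i) => // /imsetP[].
by rewrite (hsupp i iB).
Qed.

Lemma count_gen : (l ^ m * 'C(l.+1, m) <=
  #|[set S : {set T} | (#|S| == m) && Defs.generated S f]|)%N.
Proof.
set Gs := [set S : {set T} | _].
set D := phi @: Gs.
apply: leq_trans (leq_imset_card phi Gs).
have -> : (l ^ m * 'C(l.+1, m) = \sum_(B in [set B : {set 'I_l.+1} | #|B| == m])
             #|pfamily None B Fi|)%N.
  rewrite (eq_bigr (fun _ => l ^ m)%N); last first.
    by move=> B; rewrite inE => /eqP hB; rewrite card_pf hB.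
  by rewrite sum_nat_const card_draws card_ord mulnC.
under eq_bigr => B _ do rewrite (card_sumb (pfamily None B Fi)).
rewrite exchange_big /= (card_sumb D).
apply: leq_sum => g _.
case: (boolP (g \in D)) => gD.
  apply: (@leq_trans (\sum_(B : {set 'I_l.+1}) (g \in pfamily None B Fi : nat))).
    rewrite [X in (_ <= X)%N](bigID (fun B => B \in [set B : {set 'I_l.+1} | #|B| == m])) /=.
    exact: leq_addr.
  apply: (@leq_trans (\sum_(B : {set 'I_l.+1}) (B == [set i | g i != None] : nat))).
    apply: leq_sum => B _; case: (boolP (g \in _)) => // gp.
    by rewrite -(pf_supp B g gp) eqxx.
  rewrite (bigD1 [set i | g i != None]) //= eqxx big1 ?gD // => B /negbTE ->.
  by [].
rewrite big1 // => B; rewrite inE => /eqP hB.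
by case: (boolP (g \in _)) => // gp; move: (pf_surj B g hB gp); rewrite (negbTE gD).
Qed.
End PerF.


Section Main.
Variables (l k N : nat).
Local Notation T := (ground l).
Local Notation fT := {ffun T -> 'I_l.+1}.
Definition O := #|[set f : fT | part_ok f]|.
Definition draws := [set S : {set T} | #|S| == 2 * k].

Lemma card_allP (P : pred fT) :
  #|[set Y : {ffun 'I_N -> fT} | [forall j, P (Y j)]]| = (#|P| ^ N)%N.
Proof.
have -> : (#|P| ^ N = #|P| ^ #|'I_N|)%N by rewrite card_ord.
rewrite -card_ffun_on; apply: eq_card => Y; rewrite inE.
by apply/forallP/ffun_onP.
Qed.

Lemma card_Omega : #|Omega l N| = (O ^ N)%N.
Proof. by rewrite card_allP /O cardsE. Qed.

Definition BS (S : {set T}) :=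
  [set Y in Omega l N | [forall j, ~~ Defs.generated S (Y j)]].

Lemma G_le S : (G l S <= O)%N.
Proof. by apply: subset_leq_card; apply/subsetP => f; rewrite !inE => /andP[]. Qed.

Lemma card_BS S : #|BS S| = ((O - G l S) ^ N)%N.
Proof.
pose P := [pred f : fT | part_ok f && ~~ Defs.generated S f].
have -> : BS S = [set Y : {ffun 'I_N -> fT} | [forall j, P (Y j)]].
  apply/setP => Y; rewrite !inE; apply/andP/forallP.
    by move=> [/forallP H1 /forallP H2] j; rewrite inE /= H1 H2.
  by move=> H; split; apply/forallP => j; have := H j; rewrite inE /= => /andP[].
rewrite card_allP; congr (_ ^ _)%N.
have h := cardsID [set f : fT | Defs.generated S f] [set f : fT | part_ok f].
have -> : G l S = #|[set f : fT | part_ok f] :&: [set f : fT | Defs.generated S f]|.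
  by rewrite /G; apply: eq_card => f; rewrite !inE.
rewrite /O -h addKn; apply: eq_card => f; rewrite !inE andbC.
by [].
Qed.

Lemma union_bound : (#|bad_event l k N| <= \sum_(S in draws) #|BS S|)%N.
Proof.
under eq_bigr => S _ do rewrite (card_sumb (BS S)).
rewrite exchange_big /= (card_sumb (bad_event l k N)).
apply: leq_sum => Y _.
case: (boolP (Y \in bad_event l k N)) => // /[dup] Yb.
rewrite inE => /andP[YO /existsP[S /andP[hS hj]]].
rewrite (bigD1 S) /=; last by rewrite inE.
by rewrite inE YO hj.
Qed.

Lemma dbl S : S \in draws -> (O * (l ^ (2 * k) * 'C(l.+1, 2 * k)) <= 'C(l * l.+1, 2 * k) * G l S)%N.
Proof.
move=> hS.
have hsum : (\sum_(S' in draws) G l S' = 'C(l * l.+1, 2 * k) * G l S)%N.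
  rewrite (eq_bigr (fun _ => G l S)); last first.
    move=> S'; rewrite inE => /eqP h; apply: (G_const l _ S' S (erefl _)).
    by move: hS; rewrite inE => /eqP ->.
  by rewrite sum_nat_const card_draws card_ord.
rewrite -hsum.
under eq_bigr => S' _ do rewrite /G (card_sumb [set f : fT | _]).
rewrite exchange_big /= /O (card_sumb [set f : fT | part_ok f]) big_distrl /=.
apply: leq_sum => f _; rewrite inE.
case: (boolP (part_ok f)) => // fok; rewrite mul1n.
apply: (leq_trans (@count_gen l (2 * k) f fok)).
rewrite (card_sumb [set S0 : {set T} | _]) [X in (_ <= X)%N]big_mkcond /=.
apply: leq_sum => S' _; rewrite !inE fok /=; by case: (#|S'| == 2 * k).
Qed.
End Main.


Lemma ffact_mono l j : (j <= l.+1)%N -> (l ^ j * l.+1 ^_ j <= (l * l.+1) ^_ j)%N.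
Proof.
elim: j => [|j IH] hj; first by rewrite !ffactn0.
rewrite !ffactnSr expnSr.
have h1 := IH (ltnW hj).
have h2 : (l * (l.+1 - j) <= l * l.+1 - j)%N.
  rewrite mulnBr leq_sub2l //; case: l {IH h1} hj => [|l'] hj; [by case: j hj | by rewrite leq_pmull].
rewrite [X in (X <= _)%N](_ : _ = (l ^ j * l.+1 ^_ j) * (l * (l.+1 - j)))%N; last by ring.
exact: leq_mul.
Qed.

Lemma ffact_le_exp n m : (n ^_ m <= n ^ m)%N.
Proof.
elim: m => [|m IH]; first by rewrite ffactn0.
by rewrite ffactnSr expnSr; apply: leq_mul => //; apply: leq_subr.
Qed.

Lemma bin_le_exp n m : ('C(n, m) <= n ^ m)%N.
Proof.
apply: leq_trans (ffact_le_exp n m); rewrite -bin_ffact.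
by rewrite leq_pmulr // fact_gt0.
Qed.

Lemma T0_le_M l k : (2 * k <= l.+1)%N ->
  (l ^ (2 * k) * 'C(l.+1, 2 * k) <= 'C(l * l.+1, 2 * k))%N.
Proof.
move=> h; rewrite -(leq_pmul2r (fact_gt0 (2 * k))) -mulnA !bin_ffact.
exact: ffact_mono.
Qed.


Local Open Scope ring_scope.

Lemma ffact_rat (l j : nat) : (0 < l)%N -> (j <= l.+1)%N ->
  (2 * l%:R - j%:R * (j%:R - 1)) * ((l * l.+1) ^_ j)%:R
    <= 2 * l%:R * (l ^ j * l.+1 ^_ j)%:R :> rat.
Proof.
move=> l0; elim: j => [|j IH] hj.
  by rewrite !ffactn0 mul0r subr0 expn0 !mul1n.
have {}IH := IH (ltnW hj).
rewrite !ffactnSr expnSr.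
rewrite [X in _ <= _ * X%:R](_ : _ = (l ^ j * l.+1 ^_ j) * (l * (l.+1 - j)))%N; last by ring.
set a := ((l * l.+1) ^_ j)%:R : rat.
set b := (l ^ j * l.+1 ^_ j)%:R : rat.
rewrite (natrM _ ((l * l.+1) ^_ j)) (natrM _ (l ^ j * _)) -/a -/b.
rewrite (natrB _ (_ : j <= l * l.+1)%N); last by nia.
rewrite !natrM (natrB _ (_ : j <= l.+1)%N); last by lia.
rewrite -!natr1.
set x := j%:R : rat.
set L := l%:R : rat.
have a0 : 0 <= a by rewrite ler0n.
have x0 : 0 <= x by rewrite ler0n.
have xl : x <= L by rewrite ler_nat; lia.
have L1 : 1 <= L by rewrite ler1n.
have xx : 0 <= x * (x - 1).
  rewrite /x; case: (j) => [|j']; first by rewrite mul0r.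
  by rewrite -natr1 addrK; apply: mulr_ge0; rewrite ?addr_ge0 ?ler0n.
have p0 : 0 <= L * (L + 1 - x) by apply: mulr_ge0; lra.
have h := ler_wpM2r p0 IH.
have st : 0 <= 4 * L - 2 * x + x * (x - 1) * (L - 1).
  have : 0 <= x * (x - 1) * (L - 1) by apply: mulr_ge0; lra.
  lra.
have h2 : 0 <= a * x * (4 * L - 2 * x + x * (x - 1) * (L - 1)).
  by apply: mulr_ge0 => //; apply: mulr_ge0.
have E : (2 * L - x * (x - 1)) * a * (L * (L + 1 - x))
     - (2 * L - (x + 1) * (x + 1 - 1)) * (a * (L * (L + 1) - x))
     = a * x * (4 * L - 2 * x + x * (x - 1) * (L - 1)) by ring.
have h3 : (2 * L - (x + 1) * (x + 1 - 1)) * (a * (L * (L + 1) - x))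
   <= (2 * L - x * (x - 1)) * a * (L * (L + 1 - x)).
  by rewrite -subr_ge0 E.
move: h; rewrite -/a -/b -/x -/L => h.
apply: le_trans h3 _.
apply: (le_trans h); rewrite le_eqVlt; apply/orP; left; apply/eqP; ring.
Qed.


Lemma PS_ge0 (l k : nat) : (2 * k <= l.+1)%N ->
  0 <= 1 - (l ^ (2 * k) * 'C(l.+1, 2 * k))%:R / ('C(l * l.+1, 2 * k))%:R :> rat.
Proof.
move=> h; rewrite subr_ge0.
have := @T0_le_M l k h; set t := (l ^ _ * _)%N; set m := 'C(_, _) => htm.
case: (posnP m) => [->|m0]; first by rewrite invr0 mulr0.
by rewrite ler_pdivrMr ?ltr0n // mul1r ler_nat.
Qed.

Lemma PS_le (l k : nat) : (0 < l)%N -> (2 * k <= l.+1)%N ->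
  1 - (l ^ (2 * k) * 'C(l.+1, 2 * k))%:R / ('C(l * l.+1, 2 * k))%:R
    <= k%:R * (2 * k%:R - 1) / l%:R :> rat.
Proof.
move=> l0 h.
have := @ffact_rat l (2 * k) l0 h.
rewrite -!bin_ffact mulnA (natrM _ ('C(_, _))) (natrM _ (l ^ _ * _)%N) (natrM _ 2 k).
set t := (l ^ _ * _)%:R; set m := ('C(_, _))%:R.
have f0 : 0 < ((2 * k)`!)%:R :> rat by rewrite ltr0n fact_gt0.
rewrite !mulrA ler_pM2r //.
have m0 : 0 < m.
  rewrite ltr0n bin_gt0; apply: leq_trans h _; nia.
have L0 : 0 < l%:R :> rat by rewrite ltr0n.
move=> H.
rewrite ler_pdivlMr //.
have -> : (1 - t / m) * l%:R = ((m - t) * l%:R) / m.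
  by field; rewrite lt0r_neq0.
rewrite ler_pdivrMr //.
set L := l%:R in H L0 *; set K := k%:R in H *.
nra.
Qed.

Lemma M_le (l k : nat) : (0 < l)%N ->
  ('C(l * l.+1, 2 * k))%:R <= 4 ^+ k * (l%:R) ^+ (4 * k) :> rat.
Proof.
move=> l0.
have h1 := bin_le_exp (l * l.+1) (2 * k).
have h2 : ((l * l.+1) ^ (2 * k) <= (2 * l * l) ^ (2 * k))%N.
  have hb : (l * l.+1 <= 2 * l * l)%N by nia.
  by elim: (2 * k)%N => // e IH; rewrite !expnS leq_mul.
have -> : (4 ^+ k * l%:R ^+ (4 * k) : rat) = ((2 * l * l) ^ (2 * k))%:R.
  by rewrite natrX !natrM !exprMn -mulrA -exprD -mulnDl exprM [2 ^+ (2 * k)]exprM -natrX.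
by rewrite ler_nat; apply: leq_trans h2.
Qed.


Lemma part1 (l k N : nat) : (0 < l)%N -> (2 * k <= l + 1)%N -> (0 < N)%N ->
  P_N l k N <= ('C(l * l.+1, 2 * k))%:R * PS l k ^+ N.
Proof.
move=> l0 hkl N0.
have hk : (2 * k <= l.+1)%N by lia.
have PS0 : 0 <= PS l k by rewrite /PS; apply: PS_ge0.
rewrite /P_N card_Omega.
case: (posnP (O l)) => [O0 | Opos].
  rewrite O0 exp0n // invr0 mulr0.
  by apply: mulr_ge0; rewrite ?ler0n ?exprn_ge0.
set m := 'C(l * l.+1, 2 * k).
set t := (l ^ (2 * k) * 'C(l.+1, 2 * k))%N.
have m0 : (0 < m)%N by rewrite bin_gt0; apply: leq_trans hk _; nia.
have hub : (#|bad_event l k N| <= \sum_(S in draws l k) (O l - G l S) ^ N)%N.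
  apply: leq_trans (union_bound l k N) _; apply: leq_sum => S _; by rewrite card_BS.
apply: (@le_trans _ _ ((\sum_(S in draws l k) ((O l - G l S) ^ N)%N)%:R / ((O l) ^ N)%:R)).
  by apply: ler_wpM2r; rewrite ?invr_ge0 ?ler0n // ler_nat.
rewrite natr_sum mulr_suml.
apply: (@le_trans _ _ (\sum_(S in draws l k) PS l k ^+ N)); last first.
  by rewrite sumr_const /draws card_draws card_ord -/m mulr_natl.
apply: ler_sum => S hS.
rewrite !natrX -expr_div_n.
have Opos' : 0 < (O l)%:R :> rat by rewrite ltr0n.
have hG := G_le l S.
have hd := @dbl l k S hS.
apply: lerXn2r; rewrite ?inE.
- by apply: divr_ge0; rewrite ler0n.
- exact: PS0.
rewrite /PS -/m -/t natrB // mulrBl divff ?lt0r_neq0 // lerD2l lerN2.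
rewrite ler_pdivlMr // mulrAC ler_pdivrMr ?ltr0n //.
by rewrite -!natrM ler_nat mulnC [X in (_ <= X)%N]mulnC.
Qed.

Definition C0 (k N : nat) : rat := 4 ^+ k * (k%:R * (2 * k%:R - 1)) ^+ N.

Lemma part2 (l k N : nat) : (0 < l)%N -> (2 * k <= l + 1)%N -> (0 < N)%N ->
  P_N l k N <= C0 k N * (l%:R ^+ (4 * k) / l%:R ^+ N).
Proof.
move=> l0 hkl N0.
have hk : (2 * k <= l.+1)%N by lia.
have PS0 : 0 <= PS l k by rewrite /PS; apply: PS_ge0.
have PSle : PS l k <= k%:R * (2 * k%:R - 1) / l%:R by rewrite /PS; apply: PS_le.
apply: (le_trans (@part1 l k N l0 hkl N0)).
apply: (@le_trans _ _ ((4 ^+ k * (l%:R) ^+ (4 * k)) * (k%:R * (2 * k%:R - 1) / l%:R) ^+ N)).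
  apply: ler_pM; rewrite ?ler0n ?exprn_ge0 //; first exact: M_le.
  apply: lerXn2r => //; rewrite qualifE /=; last exact: le_trans PSle.
have l0' : l%:R != 0 :> rat by rewrite pnatr_eq0 -lt0n.
rewrite /C0 expr_div_n le_eqVlt; apply/orP; left; apply/eqP.
field; by rewrite expf_neq0.
Qed.


Theorem mainTheorem10 (k N : nat) (hk : (0 < k)%N) (hN : (0 < N)%N) :
  (forall l : nat, (0 < l)%N -> (2 * k <= l + 1)%N ->
     P_N l k N <= ('C(l * l.+1, 2 * k))%:R * PS l k ^+ N)
  /\ (exists (C : rat) (L : nat), forall l : nat, (L <= l)%N -> (2 * k <= l + 1)%N ->
        `|P_N l k N| <= C * (l%:R : rat) ^ ((4 * k)%:Z - N%:Z))
  /\ ((4 * k < N)%N -> forall eps : rat, 0 < eps ->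
        exists L : nat, forall l : nat, (L <= l)%N -> P_N l k N <= eps).
Proof.
have PN0 l : 0 <= P_N l k N by rewrite /P_N divr_ge0 ?ler0n.
have C00 : 0 <= C0 k N.
  rewrite /C0; apply: mulr_ge0; rewrite ?exprn_ge0 //.
  apply: mulr_ge0; rewrite ?ler0n // subr_ge0.
  have : (1 <= k%:R :> rat) by rewrite ler1n.
  lra.
split; first by move=> l l0 hl; apply: part1.
split.
  exists (C0 k N), 1%N => l l0 hl.
  rewrite ger0_norm //.
  have l0' : l%:R != 0 :> rat by rewrite pnatr_eq0 -lt0n.
  rewrite expfzDr // -exprnP -exprnN.
  exact: part2.
move=> hNk eps eps0.
set x := C0 k N / eps.
exists (maxn (maxn 1 (2 * k)) (Num.bound x)) => l.
rewrite !geq_max => /andP[/andP[l0 hl] hb].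
apply: (le_trans (@part2 l k N l0 _ hN)); first by lia.
have lpos : 0 < l%:R :> rat by rewrite ltr0n.
apply: (@le_trans _ _ (C0 k N / l%:R)).
  rewrite ler_wpM2l //.
  rewrite ler_pdivrMr ?exprn_gt0 // mulrC ler_pdivlMr //.
  rewrite -exprSr -!natrX ler_nat; apply: leq_pexp2l => //; lia.
rewrite ler_pdivrMr // -ler_pdivrMl // mulrC.
have x0 : 0 <= x by rewrite /x divr_ge0 // ltW.
apply: ltW; apply: (lt_le_trans (archi_boundP x0)).
by rewrite ler_nat.
Qed.
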